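(* Let $n,v,s,t$ be integers with $1\le v\le s\le t\le n$, let $u=\lceil s/v\rceil$, assume $uv\le n$, and put $n_0=n-u(v-1)$. Let $\mathfrak{P}=\{\mathcal{P}_1,\dots,\mathcal{P}_S\}$ be a $u$-complete collection of $v$-partitions of $[n]$, $\mathcal{P}_i=\{P^i_1,\dots,P^i_v\}$, such that every part satisfies $|P^i_j|\le n_0$ (this is the case, e.g., when $S=S(n,u,v)$ is minimal). Let $\mathcal{C}_0$ be a systematic linear $(u,t)$-batch code over $\mathbb{F}_q$ of dimension $n_0$ and redundancy $r_0$, with (linear) encoder $\mathcal{E}_0:\mathbb{F}_q^{n_0}\to\mathbb{F}_q^{r_0}$ such that $(\mathbf{x},\mathcal{E}_0(\mathbf{x}))\in\mathcal{C}_0$ for all $\mathbf{x}$. Define $\mathcal{E}:\mathbb{F}_q^n\to\mathbb{F}_q^{vSr_0}$ by $$\mathcal{E}(\mathbf{x})=\big(\mathcal{E}_0(\mathbf{x}|_{P^1_1},\mathbf{0}),\dots,\mathcal{E}_0(\mathbf{x}|_{P^1_v},\mathbf{0}),\dots,\mathcal{E}_0(\mathbf{x}|_{P^S_1},\mathbf{0}),\dots,\mathcal{E}_0(\mathbf{x}|_{P^S_v},\mathbf{0})\big),$$ where $\mathbf{x}|_P$ lists the coordinates of $\mathbf{x}$ indexed by $P$ in increasing order and $(\mathbf{x}|_P,\mathbf{0})\in\mathbb{F}_q^{n_0}$ is obtained by appending zeros. Then $\mathcal{C}=\{(\mathbf{x},\mathcal{E}(\mathbf{x})):\mathbf{x}\in\mathbb{F}_q^n\}$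 is an $(s,t)$-batch code of dimension $n$ and redundancy $v\cdot S\cdot r_0$.
   Context: $[m]=\{1,\dots,m\}$. A linear code $\mathcal{C}\subseteq\mathbb{F}^N$ of dimension $n$ is systematic if for every $\mathbf{x}\in\mathbb{F}^n$ there is a unique codeword whose first $n$ coordinates equal $\mathbf{x}$. A set $R\subseteq[N]$ is a recovering set for $i\in[n]$ if there are scalars $\lambda_k$ ($k\in R$) with $\mathbf{c}(i)=\sum_{k\in R}\lambda_k\mathbf{c}(k)$ for all $\mathbf{c}\in\mathcal{C}$. $(s,t)$-batch code ($1\le s\le t$): a systematic linear code $\mathcal{C}\subseteq\mathbb{F}^N$ of dimension $n$ such that for every choice of indices $i_1,\dots,i_s\in[n]$ (not necessarily distinct) and nonnegative integers $a_1,\dots,a_s$ with $\sum_j a_j=t$, there exist $t$ pairwise disjoint sets $R_{j,l}\subseteq[N]$ ($j\in[s]$, $l\in[a_j]$), each a recovering set for $i_j$. Redundancy is $N-n$. A $v$-partition of $[n]$ is a partition of $[n]$ into $v$ sets $P_1,\dots,P_v$ (for this definition parts may be empty). A $uv$-subset $I\subseteq[n]$ is covered by the $v$-partition $\{P_1,\dots,P_v\}$ if $|P_i\cap I|=u$ for all $i\in[v]$. A collection of $v$-partitions of $[n]$ is $u$-complete if every $uv$-subset of $[n]$ is covered by some member of the collection. $S(n,u,v)$ is the minimum cardinality of a $u$-complete collection of $v$-partitions of $[n]$ (for $uv\le n$). *)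

(* Defs.v *)
From HB Require Import structures.
From mathcomp Require Import all_boot all_order all_algebra all_field.
Set Implicit Arguments. Unset Strict Implicit. Unset Printing Implicit Defensive.
Import GRing.Theory.
Local Open Scope ring_scope.

Section Codes.
Variable F : finFieldType.

Definition linear_code (N : nat) (C : {set 'rV[F]_N}) : Prop :=
  0 \in C /\ forall (a : F) (x y : 'rV[F]_N), x \in C -> y \in C -> a *: x + y \in C.

Definition systematic (n r : nat) (C : {set 'rV[F]_(n + r)}) : Prop :=
  forall x : 'rV[F]_n, exists! c : 'rV[F]_(n + r), c \in C /\ lsubmx c = x.

Definition recovering_set (n r : nat) (C : {set 'rV[F]_(n + r)})
    (i : 'I_n) (R : {set 'I_(n + r)}) : Prop :=
  exists lam : 'I_(n + r) -> F,
    forall c, c \in C -> c 0 (lshift r i) = \sum_(k in R) lam k * c 0 k.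

Definition batch_code (s t n r : nat) (C : {set 'rV[F]_(n + r)}) : Prop :=
  [/\ (1 <= s <= t)%N, linear_code C, systematic C &
   forall (idx : 'I_s -> 'I_n) (a : 'I_s -> nat),
     (\sum_(j < s) a j)%N = t ->
     exists R : forall j : 'I_s, 'I_(a j) -> {set 'I_(n + r)},
       (forall j (l : 'I_(a j)), recovering_set C (idx j) (R j l)) /\
       (forall j (l : 'I_(a j)) j' (l' : 'I_(a j')),
          (j != j') || (nat_of_ord l != nat_of_ord l') ->
          [disjoint R j l & R j' l'])].

End Codes.

(* v-partition of [n] (parts indexed by 'I_v, possibly empty) *)
Definition v_partition (n v : nat) (P : 'I_v -> {set 'I_n}) : Prop :=
  (forall x : 'I_n, exists j, x \in P j) /\
  (forall j j', j != j' -> [disjoint P j & P j']).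

Definition covers (n u v : nat) (P : 'I_v -> {set 'I_n}) (I : {set 'I_n}) : Prop :=
  forall j, #|P j :&: I| = u.

Definition u_complete (n u v S : nat) (Pcol : 'I_S -> 'I_v -> {set 'I_n}) : Prop :=
  forall I : {set 'I_n}, #|I| = (u * v)%N -> exists i, covers u (Pcol i) I.

Definition ceil_div (s v : nat) : nat := ((s + v.-1) %/ v)%N.

(* (x|_P, 0) in F^{n0}: coordinates of x indexed by P in increasing order,
   padded with zeros (truncated if #|P| > n0, which is excluded in the theorem) *)
Definition restrict_pad (F : fieldType) (n n0 : nat) (P : {set 'I_n}) (x : 'rV[F]_n)
  : 'rV[F]_n0 :=
  \row_(k < n0) oapp (fun i : 'I_n => x 0 i) 0 (onth (enum P) k).

(* E(x) = (E0(x|P^1_1,0), ..., E0(x|P^1_v,0), ..., E0(x|P^S_v,0)),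
   of length S*(v*r0) = v*S*r0 *)
Definition concat_encoder (F : fieldType) (n n0 r0 v S : nat)
    (Pcol : 'I_S -> 'I_v -> {set 'I_n}) (E0 : 'rV[F]_n0 -> 'rV[F]_r0)
    (x : 'rV[F]_n) : 'rV[F]_(S * (v * r0)) :=
  mxvec (\matrix_(i < S, jk < v * r0)
           (mxvec (\matrix_(j < v, k < r0) E0 (restrict_pad n0 (Pcol i j) x) 0 k)) 0 jk).

Definition code_of (F : finFieldType) (n r : nat) (E : 'rV[F]_n -> 'rV[F]_r)
  : {set 'rV[F]_(n + r)} :=
  [set row_mx x (E x) | x : 'rV[F]_n].

(* Main.v *)
Require Import Defs.
From HB Require Import structures.
From mathcomp Require Import all_boot all_order all_algebra all_field.
From mathcomp Require Import zify.
Set Implicit Arguments. Unset Strict Implicit. Unset Printing Implicit Defensive.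
Import GRing.Theory.
Local Open Scope ring_scope.

Lemma ext_set (T : finType) (k : nat) : forall (A : {set T}),
  (#|A| <= k)%N -> (k <= #|T|)%N -> exists B : {set T}, A \subset B /\ #|B| = k.
Proof.
move=> A; move Hd: (k - #|A|)%N => d; elim: d A Hd => [|d IH] A Hd hA hk.
  exists A; split => //; apply/eqP; rewrite eqn_leq hA /=. 
  by move/eqP: Hd; rewrite subn_eq0.
case: (pickP (fun x => x \notin A)) => [x hx|hn]; last first.
  have : A = setT by apply/setP => x; rewrite inE; have := hn x; case: (x \in A).
  move=> hAT; rewrite hAT cardsT in Hd; lia.
have [||B [hB1 hB2]] := IH (x |: A) _ _ hk.
- by rewrite cardsU1 hx; lia.
- by rewrite cardsU1 hx; lia.
- by exists B; split => //; apply: subset_trans hB1; apply: subsetUr.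
Qed.

Lemma ceil_ok (s v : nat) : (0 < v)%N -> (s <= ceil_div s v * v)%N.
Proof.
move=> hv; rewrite /ceil_div.
have := divn_eq (s + v.-1) v; have := ltn_pmod (s + v.-1) hv. lia.
Qed.

Lemma sum_img (F : fieldType) (K Z : finType) (psi : K -> option Z) (R0 : {set K})
  (lam : K -> F) : exists lam' : Z -> F, forall f : Z -> F,
  \sum_(k in R0) lam k * oapp f 0 (psi k) =
  \sum_(z in [set z | [exists k in R0, psi k == Some z]]) lam' z * f z.
Proof.
exists (fun z => \sum_(k in R0 | psi k == Some z) lam k) => f.
have -> : \sum_(z in [set z | [exists k in R0, psi k == Some z]])
    (\sum_(k in R0 | psi k == Some z) lam k) * f z =
   \sum_z (\sum_(k in R0 | psi k == Some z) lam k) * f z.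
  rewrite [RHS](bigID (fun z => z \in [set z | [exists k in R0, psi k == Some z]])) /=.
  rewrite [X in _ = _ + X]big1 ?addr0 //.
  move=> z; rewrite inE => /existsPn hz; rewrite big_pred0 ?mul0r // => k.
  by apply/negbTE; have := hz k; rewrite negb_and.
under [RHS]eq_bigr do rewrite mulr_suml.
rewrite (exchange_big_dep (mem R0)) /=; last by move=> z k _ /andP[].
apply: eq_bigr => k hk.
case E: (psi k) => [z0|] /=.
  rewrite (big_pred1 z0) //= => z; rewrite hk /=.
  by apply/eqP/eqP => [[->]|->].
by rewrite mulr0 big1 // => z /andP[].
Qed.
Lemma rp_lin (F : fieldType) n n0 (P : {set 'I_n}) (a : F) x y :
  restrict_pad n0 P (a *: x + y) = a *: restrict_pad n0 P x + restrict_pad n0 P y.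
Proof.
apply/rowP => k; rewrite !mxE; case: onth => [g|] /=; first by rewrite !mxE.
by rewrite mulr0 addr0.
Qed.

Lemma ce_lin (F : fieldType) n n0 r0 v S (Pcol : 'I_S -> 'I_v -> {set 'I_n})
  (E0 : 'rV[F]_n0 -> 'rV[F]_r0) :
  (forall a x y, E0 (a *: x + y) = a *: E0 x + E0 y) ->
  forall a x y, @concat_encoder F n n0 r0 v S Pcol E0 (a *: x + y) =
    a *: @concat_encoder F n n0 r0 v S Pcol E0 x + @concat_encoder F n n0 r0 v S Pcol E0 y.
Proof.
move=> h a x y; apply/rowP => k; case/mxvec_indexP: k => i jk.
rewrite [RHS]mxE [in RHS]mxE /concat_encoder !mxvecE !mxE.
case/mxvec_indexP: jk => j m; rewrite !mxvecE !mxE rp_lin h !mxE.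
by [].
Qed.

Lemma mxvec_index_inj m n (i1 i2 : 'I_m) (j1 j2 : 'I_n) :
  mxvec_index i1 j1 = mxvec_index i2 j2 -> i1 = i2 /\ j1 = j2.
Proof.
by move/cast_ord_inj/enum_rank_inj => [-> ->].
Qed.

Lemma onth_index (T : eqType) (s : seq T) g : g \in s -> onth s (index g s) = Some g.
Proof. by move=> hg; rewrite onthE (nth_map g) ?index_mem ?nth_index. Qed.

Lemma onth_some (T : eqType) (s : seq T) p g : onth s p = Some g ->
  (p < size s)%N /\ nth g s p = g.
Proof.
move=> e; split; last exact: onth_nth e.
by have := onthTE s p; rewrite e.
Qed.

From Stdlib Require Import ClassicalEpsilon.

Theorem theorem4 (F : finFieldType) (n v s t u n0 r0 S : nat)
  (hv : (1 <= v)%N) (hvs : (v <= s)%N) (hst : (s <= t)%N) (htn : (t <= n)%N)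
  (hu : u = ceil_div s v) (huv : (u * v <= n)%N) (hn0 : n0 = (n - u * (v - 1))%N)
  (Pcol : 'I_S -> 'I_v -> {set 'I_n})
  (hpart : forall i, v_partition (Pcol i))
  (hcomp : u_complete u Pcol)
  (hsize : forall i j, (#|Pcol i j| <= n0)%N)
  (C0 : {set 'rV[F]_(n0 + r0)})
  (hC0 : batch_code u t C0)
  (E0 : 'rV[F]_n0 -> 'rV[F]_r0)
  (hE0lin : forall (a : F) (x y : 'rV[F]_n0), E0 (a *: x + y) = a *: E0 x + E0 y)
  (hE0 : forall x : 'rV[F]_n0, row_mx x (E0 x) \in C0) :
  batch_code s t (code_of (@concat_encoder F n n0 r0 v S Pcol E0)).
Proof.
have sle : (s <= u * v)%N by rewrite hu; exact: ceil_ok.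
have upos : (0 < u)%N by move: sle; case: (u) => //; lia.
have n0pos : (0 < n0)%N.
  have e : (u * (v - 1) = u * v - u)%N by rewrite mulnBr muln1.
  lia.
clear hu hn0.
move: n0pos; case: n0 hsize C0 hC0 E0 hE0lin hE0 => // n0 hsize C0 hC0 E0 hE0lin hE0 _.
move: upos; case: u huv hcomp hC0 sle => // u huv hcomp hC0 sle _.
set E := @concat_encoder F n n0.+1 r0 v S Pcol E0.
have Elin : forall a x y, E (a *: x + y) = a *: E x + E y := ce_lin Pcol hE0lin.
have E00 : E 0 = 0.
  have h := Elin (-1) 0 0; rewrite !scaleN1r oppr0 add0r addNr in h; exact h.
split.
- by apply/andP; split; lia.
- split; first by apply/imsetP; exists 0 => //; rewrite E00 row_mx0.
  move=> a x y /imsetP[x' _ ->] /imsetP[y' _ ->]; apply/imsetP.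
  exists (a *: x' + y') => //; rewrite Elin.
  by rewrite scale_row_mx add_row_mx.
- move=> x; exists (row_mx x (E x)); split.
    by split; [apply/imsetP; exists x | rewrite row_mxKl].
  move=> c [/imsetP[y _ ->]]; rewrite row_mxKl => ->. by [].
move=> idx a Hsum.
have spos : (0 < s)%N by lia.
pose d : 'I_n := idx (Ordinal spos).
pose I0 := idx @: [set: 'I_s].
have hI0 : (#|I0| <= u.+1 * v)%N.
  by apply: leq_trans (leq_imset_card _ _) _; rewrite cardsT card_ord.
have hn : (u.+1 * v <= #|'I_n|)%N by rewrite card_ord.
have [I [hI0I hIc]] := ext_set hI0 hn.
have [i hcov] := hcomp I hIc.
have [hPcov hPdis] := hpart i.
pose part (g : 'I_n) : 'I_v := xchoose (hPcov g).
have part_in g : g \in Pcol i (part g) := xchooseP (hPcov g).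
have part_uniq g j : g \in Pcol i j -> part g = j.
  move=> hg; apply/eqP; apply/negPn/negP => hne.
  by have := disjointFr (hPdis _ _ hne) (part_in g); rewrite hg.
pose PI j := Pcol i j :&: I.
have hPI j : #|PI j| = u.+1 := hcov j.
pose slot j (g : 'I_n) : 'I_u.+1 := inord (index g (enum (PI j))).
pose elem j (k : 'I_u.+1) : 'I_n := nth d (enum (PI j)) k.
have elem_slot j g : g \in PI j -> elem j (slot j g) = g.
  move=> hg; rewrite /elem /slot inordK ?nth_index ?mem_enum //.
  by rewrite -(hPI j) cardE index_mem mem_enum.
pose loc j (g : 'I_n) : 'I_n0.+1 := inord (index g (enum (Pcol i j))).
pose idx0 j k := loc j (elem j k).
pose TT := {jr : 'I_s & 'I_(a jr)}.
pose T j k := [set tok : TT | (part (idx (tag tok)) == j) && (slot j (idx (tag tok)) == k)].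
pose K j := (\sum_k #|T j k|)%N.
pose a0 j k := (#|T j k| + (k == ord0) * (t - K j))%N.
have hK j : (K j <= t)%N.
  rewrite /K (eq_bigr (fun k => \sum_(tok : TT | (part (idx (tag tok)) == j)
      && (slot j (idx (tag tok)) == k)) 1)%N); last first.
    by move=> k _; rewrite -sum1_card; apply: eq_bigl => tok; rewrite inE.
  rewrite -(partition_big (fun tok : TT => slot j (idx (tag tok))) predT) //=.
  apply: (@leq_trans (\sum_(tok : TT) 1)%N).
    rewrite [X in (X <= _)%N]big_mkcond /=. apply: leq_sum. by move=> tok _; case: ifP.
  rewrite sum1_card card_tagged sumnE big_map big_enum /= -Hsum.
  by apply: eq_leq; apply: eq_bigr => jr _; rewrite card_ord.
have ha0 j : (\sum_k a0 j k)%N = t.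
  rewrite big_split /= -/(K j) [X in (_ + X)%N]big_ord_recl eqxx mul1n big1 ?addn0.
    by have := hK j; lia.
  by move=> k _.
have [_ _ _ hb0] := hC0.
have R0ex j := hb0 (idx0 j) (a0 j) (ha0 j).
pose R0 j := proj1_sig (constructive_indefinite_description _ (R0ex j)).
have hR0 j := proj2_sig (constructive_indefinite_description _ (R0ex j)).
pose psi j (k : 'I_(n0.+1 + r0)) : option 'I_(n + S * (v * r0)) :=
  match split k with
  | inl p => omap (@lshift n (S * (v * r0))) (onth (enum (Pcol i j)) p)
  | inr m => Some (rshift n (mxvec_index i (mxvec_index j m)))
  end.
have point x j k :
  (row_mx (restrict_pad n0.+1 (Pcol i j) x) (E0 (restrict_pad n0.+1 (Pcol i j) x))) 0 k
  = oapp (row_mx x (E x) 0) 0 (psi j k).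
  rewrite -[k]splitK; case: (split k) => [p|m]; rewrite /psi unsplitK /=.
  - by rewrite row_mxEl mxE; case: onth => //= g; rewrite row_mxEl.
  - by rewrite row_mxEr row_mxEr /E /concat_encoder mxvecE mxE mxvecE mxE.
have psi_inj j1 j2 k1 k2 z : psi j1 k1 = Some z -> psi j2 k2 = Some z ->
    j1 = j2 /\ k1 = k2.
  rewrite -[k1]splitK -[k2]splitK.
  case: (split k1) => [p1|m1]; case: (split k2) => [p2|m2]; rewrite /psi !unsplitK.
  - case E1: onth => [g1|] //= [<-]; case E2: onth => [g2|] //= [eg].
    have eg' : g2 = g1 by apply: val_inj.
    rewrite eg' in E2.
    have [hp1 hn1] := onth_some E1; have [hp2 hn2] := onth_some E2.
    have m1 : g1 \in Pcol i j1 by rewrite -mem_enum -hn1 mem_nth.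
    have m2 : g1 \in Pcol i j2 by rewrite -mem_enum -hn2 mem_nth.
    have ej : j1 = j2 by rewrite -(part_uniq _ _ m1) (part_uniq _ _ m2).
    subst j2; split => //; congr (lshift _ _); apply: val_inj => /=.
    by rewrite -(index_uniq g1 hp1 (enum_uniq _)) -(index_uniq g1 hp2 (enum_uniq _)) hn1 hn2.
  - case E1: onth => [g1|] //= [<-] /(congr1 (fun o => oapp val 0%N o)) /=.
    by have := ltn_ord g1; lia.
  - move=> [<-]; case E2: onth => [g2|] //= /(congr1 (fun o => oapp val 0%N o)) /=.
    by have := ltn_ord g2; lia.
  - move=> e1 e2; have := Some_inj (etrans e1 (esym e2)).
    by move=> /rshift_inj /mxvec_index_inj [_ /mxvec_index_inj [-> ->]].
pose Img j k (m : 'I_(a0 j k)) := [set z | [exists k' in R0 j k m, psi j k' == Some z]].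
have key j1 j2 k1 k2 (m1 : 'I_(a0 j1 k1)) (m2 : 'I_(a0 j2 k2)) z :
    z \in Img j1 k1 m1 -> z \in Img j2 k2 m2 ->
    [/\ j1 = j2, k1 = k2 & val m1 = val m2].
  rewrite !inE => /existsP[q1 /andP[hq1 /eqP e1]] /existsP[q2 /andP[hq2 /eqP e2]].
  have [ej eq] := psi_inj _ _ _ _ _ e1 e2; subst j2 q2.
  case: (boolP ((k1 != k2) || (val m1 != val m2))) => [h|].
    by have := disjointFr ((hR0 j1).2 _ _ _ _ h) hq1; rewrite hq2.
  by rewrite negb_or !negbK => /andP[/eqP ek /eqP em].
have tokmem jr (l : 'I_(a jr)) :
    Tagged (fun jr => 'I_(a jr)) l \in T (part (idx jr)) (slot (part (idx jr)) (idx jr)).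
  by rewrite inE /= !eqxx.
have ltoka jr (l : 'I_(a jr)) : (index (Tagged (fun jr => 'I_(a jr)) l)
    (enum (T (part (idx jr)) (slot (part (idx jr)) (idx jr)))) <
    a0 (part (idx jr)) (slot (part (idx jr)) (idx jr)))%N.
  apply: leq_trans (leq_addr _ _).
  by rewrite cardE index_mem mem_enum tokmem.
exists (fun jr l =>
  \bigcup_(m : 'I_(a0 (part (idx jr)) (slot (part (idx jr)) (idx jr))) |
      val m == index (Tagged (fun jr => 'I_(a jr)) l)
    (enum (T (part (idx jr)) (slot (part (idx jr)) (idx jr)))))
    Img (part (idx jr)) (slot (part (idx jr)) (idx jr)) m).
split.
  move=> jr l /=.
  have hgPI : idx jr \in PI (part (idx jr)).
    rewrite inE part_in /=; apply: (subsetP hI0I).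
    by apply/imsetP; exists jr.
  set j := part (idx jr) in hgPI *. set k := slot j (idx jr).
  pose m0 : 'I_(a0 j k) := Ordinal (ltoka jr l).
  rewrite (big_pred1 m0); last first.
    by move=> m; apply/eqP/eqP => [e|->]; [apply: val_inj|].
  have [lam hlam] := (hR0 j).1 k m0.
  have [lam' hl'] := sum_img (psi j) (R0 j k m0) lam.
  exists lam' => c /imsetP[x _ ->].
  rewrite -hl'.
  pose y := restrict_pad n0.+1 (Pcol i j) x.
  rewrite (eq_bigr (fun q => lam q * row_mx y (E0 y) 0 q)); last by move=> q _; rewrite point.
  rewrite -hlam // point /psi.
  have -> : split (lshift r0 (idx0 j k)) = inl (idx0 j k) := unsplitK (inl _).
  have hgP : idx jr \in Pcol i j by move: hgPI; rewrite inE => /andP[].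
  rewrite /idx0 /k elem_slot // /loc inordK ?onth_index ?mem_enum //=.
  by apply: leq_trans (hsize i j); rewrite cardE index_mem mem_enum.
move=> jr l jr' l' hne /=.
rewrite -setI_eq0; apply/eqP/setP => z; rewrite in_setI in_set0.
apply/negbTE/negP => /andP[/bigcupP[m1 hm1 hz1] /bigcupP[m2 hm2 hz2]].
have [ej ek em] := key _ _ _ _ m1 m2 z hz1 hz2.
have e : index (Tagged (fun jr => 'I_(a jr)) l)
    (enum (T (part (idx jr)) (slot (part (idx jr)) (idx jr)))) =
  index (Tagged (fun jr => 'I_(a jr)) l')
    (enum (T (part (idx jr')) (slot (part (idx jr')) (idx jr')))).
  by rewrite -(eqP hm1) -(eqP hm2) em.
rewrite -ek -ej in e.
have mem2 : Tagged (fun jr => 'I_(a jr)) l' \in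
    T (part (idx jr)) (slot (part (idx jr)) (idx jr)).
  by rewrite ek ej; exact: tokmem.
have := congr1 (nth (Tagged (fun jr => 'I_(a jr)) l)
   (enum (T (part (idx jr)) (slot (part (idx jr)) (idx jr))))) e.
rewrite !nth_index ?mem_enum ?tokmem // => et.
have ejr : jr = jr' := congr1 tag et.
subst jr'.
move/eqP: et; rewrite eq_Tagged /= => /eqP el.
by move: hne; rewrite eqxx el eqxx.
Qed.
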